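(* Let $n\ge 4$ be a power of $4$ and let $\mathcal{H}_2$ be as in the context. Then: (a) For all integers $i,j$, $\mathbb{E}_{h\in\mathcal{H}_2}[h_ih_j]=\mathbb{E}_{h\in\mathcal{H}_2}[h_{i+\sqrt n}h_{j+\sqrt n}]$. (b) If $1\le i,i',j,j'\le n$ with $i,i'$ in the same block, $j,j'$ in the same block, $i\ne j$ and $i'\ne j'$, then $\mathbb{E}_{h\in\mathcal{H}_2}[h_ih_j]=\mathbb{E}_{h\in\mathcal{H}_2}[h_{i'}h_{j'}]$. (c) There is an absolute constant $C$ (independent of $n$) such that $\sum_{1\le i,j\le n,\ i\ne j}\left|\mathbb{E}_{h\in\mathcal{H}_2}[h_ih_j]\right|\le Cn$.
   Context: Let $n$ be a power of $4$, $\ell=\sqrt n/2$, and for $1\le c\le \sqrt n$ the $c$-th block is $\{(c-1)\sqrt n+1,\dots,c\sqrt n\}$. The family $\mathcal{H}_1$: a random $h:[n]\to\{-1,1\}$ with independent coordinates, $\mathbb{P}[h_i=1]=\tfrac12+\tfrac{1}{2(\ell+1-c)}$ for $i$ in block $c\le\ell$ and $\mathbb{P}[h_i=1]=\tfrac12-\tfrac{1}{2(c-\ell)}$ for $i$ in block $c\ge\ell+1$. Indices are taken modulo $n$ ($h_{i+n}=h_i$). The family $\mathcal{H}_2$: draw $h$ from $\mathcal{H}_1$ and independently $d$ uniform in $\{0,1,\dots,\sqrt n-1\}$, and output $h'$ with $h'_i=h_{i+d\sqrt n}$ for all $i$ (indices modulo $n$). *)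

(* Defs.v *)
From HB Require Import structures.
From mathcomp Require Import all_boot all_order all_algebra.
Set Implicit Arguments. Unset Strict Implicit. Unset Printing Implicit Defensive.
Import Order.TTheory GRing.Theory Num.Theory.
Local Open Scope ring_scope.

(* n = 4^k, sqrt n = 2^k, ell = sqrt n / 2 = 2^(k-1). *)
Definition sqn (k : nat) : nat := 2 ^ k.
Definition ell (k : nat) : nat := (2 ^ k)./2.

(* block (1-based, 1..sqrt n) of the 0-based position p (p = i-1) *)
Definition blk (k p : nat) : nat := (p %/ sqn k + 1)%N.

(* P[h_i = 1] for the coordinate at 0-based position p, family H_1 *)
Definition prob (k p : nat) : rat :=
  let c := blk k p in
  if (c <= ell k)%N then 1/2 + 1 / (2 * ((ell k + 1 - c)%N)%:R)
  else 1/2 - 1 / (2 * ((c - ell k)%N)%:R).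

Definition sgn (b : bool) : rat := if b then 1 else -1.

(* A sample h : [n] -> {-1,1} of H_1 is a tuple t of booleans (true = +1,
   entry p is h_{p+1}); its probability under the product distribution. *)
Definition wt (k : nat) (t : (4 ^ k).-tuple bool) : rat :=
  \prod_(p < 4 ^ k) (if nth false t p then prob k p else 1 - prob k p).

(* 0-based position of the integer index i (1-based, taken modulo n) *)
Definition idx (k : nat) (i : int) : nat := absz ((i - 1) %% (4 ^ k)%:Z)%Z.

Definition hval (k : nat) (t : (4 ^ k).-tuple bool) (i : int) : rat :=
  sgn (nth false t (idx k i)).

(* E_{h' in H_2}[h'_i h'_j], where h'_i = h_{i + d sqrt n}, h ~ H_1,
   d uniform in {0,...,sqrt n - 1} independent of h. *)
Definition E2 (k : nat) (i j : int) : rat :=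
  (1 / (sqn k)%:R) * \sum_(d < sqn k) \sum_(t : (4 ^ k).-tuple bool)
     wt t * hval t (i + (d * sqn k)%N%:Z) * hval t (j + (d * sqn k)%N%:Z).

(* Main.v *)
Require Import Defs.
From HB Require Import structures.
From mathcomp Require Import all_boot all_order all_algebra.
From mathcomp Require Import zify ring lra.
Import Order.TTheory GRing.Theory Num.Theory.
Local Open Scope ring_scope.

Definition Hn (n : nat) : rat := \sum_(0 <= i < n) 1 / (i.+1)%:R.
Definition Mu (u x : nat) : rat :=
  let y := (x %% (2 * u))%N in
  if (y < u)%N then 1 / (u - y)%N%:R else - (1 / (y.+1 - u)%N%:R).
Definition Ru (u d : nat) : rat := \sum_(0 <= x < 2 * u) Mu u x * Mu u (x + d).

Lemma sum_shift_per (s : nat) (F : nat -> rat) :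
  (forall x, F (x + s)%N = F x) -> forall c,
  \sum_(0 <= d < s) F (c + d)%N = \sum_(0 <= d < s) F d.
Proof.
move=> Fp; elim=> [|c IH]; first by apply: eq_bigr => d _; rewrite add0n.
case: s Fp IH => [|s] Fp IH; first by rewrite !big_geq.
rewrite big_nat_recr //= -IH big_nat_recl //= addn0.
rewrite addrC; congr (_ + _).
  by rewrite -(Fp c) addSnnS addnC.
by apply: eq_bigr => d _; rewrite addSnnS.
Qed.

Lemma sum_from (a b : nat) (F : nat -> rat) : (a <= b)%N ->
  \sum_(a <= x < b) F x = \sum_(0 <= i < b - a) F (i + a)%N.
Proof. by move=> _; rewrite -{1}(add0n a) big_addn. Qed.

Lemma Mu_lo u x : (x < u)%N -> Mu u x = 1 / (u - x)%N%:R.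
Proof. move=> h; rewrite /Mu modn_small ?h //; lia. Qed.

Lemma Mu_hi u x : (u <= x < 2 * u)%N -> Mu u x = - (1 / (x.+1 - u)%N%:R).
Proof. move=> /andP[h1 h2]; rewrite /Mu modn_small // ltnNge h1 //. Qed.

Lemma Mu_per u x : Mu u (x + 2 * u) = Mu u x.
Proof. by rewrite /Mu modnDr. Qed.

Lemma Mu_mod u x : Mu u (x %% (2 * u)) = Mu u x.
Proof. by rewrite /Mu modn_mod. Qed.


Lemma HnS n : Hn n.+1 = Hn n + 1 / (n.+1)%:R.
Proof. by rewrite /Hn big_nat_recr. Qed.
Lemma Hn0 : Hn 0 = 0.
Proof. by rewrite /Hn big_geq. Qed.

Lemma natr_neq0 (m : nat) : (0 < m)%N -> (m%:R : rat) != 0.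
Proof. by rewrite pnatr_eq0 -lt0n. Qed.

Lemma L1 dl N : (0 < dl)%N ->
  \sum_(0 <= i < N) 1 / ((i.+1)%:R * (i.+1 + dl)%N%:R)
   = (1 / dl%:R) * (Hn dl + Hn N - Hn (N + dl)).
Proof.
move=> hd; elim: N => [|N IH].
  by rewrite big_geq // Hn0 add0n addr0 subrr mulr0.
rewrite big_nat_recr //= IH addSn !HnS.
have h1 : ((dl)%:R : rat) != 0 by apply: natr_neq0.
have h2 : ((N.+1)%:R : rat) != 0 by apply: natr_neq0.
have h3 : (((N + dl).+1)%:R : rat) != 0 by apply: natr_neq0.
have e : ((N + dl).+1)%:R = (N.+1)%:R + dl%:R :> rat by rewrite -natrD addSn.
rewrite e; rewrite e in h3; field.
by rewrite -[1 + N%:R]mulrS h1 h2 h3.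
Qed.

Lemma Qsum a N : (0 < a)%N ->
  \sum_(0 <= i < N) 1 / ((a + i)%N%:R * (a + N - 1 - i)%N%:R)
   = 2 / (2 * a + N - 1)%N%:R * \sum_(0 <= i < N) 1 / (a + i)%N%:R :> rat.
Proof.
move=> ha.
have step : forall i, (i < N)%N -> 1 / ((a + i)%N%:R * (a + N - 1 - i)%N%:R)
   = 1 / (2 * a + N - 1)%N%:R * (1 / (a + i)%N%:R + 1 / (a + N - 1 - i)%N%:R) :> rat.
  move=> i hi.
  have hx : ((a + i)%N%:R : rat) != 0 by apply: natr_neq0; lia.
  have hy : ((a + N - 1 - i)%N%:R : rat) != 0 by apply: natr_neq0; lia.
  have e : (2 * a + N - 1)%N%:R = (a + i)%N%:R + (a + N - 1 - i)%N%:R :> rat.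
    by rewrite -natrD; congr (_%:R); lia.
  have hz : ((2 * a + N - 1)%N%:R : rat) != 0 by apply: natr_neq0; lia.
  rewrite e; rewrite e in hz; field.
  by rewrite -!natrD; apply/and3P; split; apply: natr_neq0; lia.
rewrite (eq_big_nat _ _ (fun i (h : (0 <= i < N)%N) => step i (proj2 (andP h)))) -big_distrr /= big_split /=.
have -> : \sum_(0 <= i < N) 1 / (a + N - 1 - i)%N%:R
     = \sum_(0 <= i < N) 1 / (a + i)%N%:R :> rat.
  rewrite big_nat_rev /=; apply: eq_big_nat => i /andP[_ hi].
  by congr (1 / _%:R); lia.
set S := \sum_(0 <= i < N) _; set T := (_ %:R); rewrite /=; ring.
Qed.
Lemma Ru_split u dl : (dl <= u)%N ->
  Ru u dl = 2 * (\sum_(0 <= i < u - dl) 1 / ((i.+1)%:R * (i.+1 + dl)%N%:R))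
          - \sum_(0 <= i < dl) 1 / ((i.+1)%:R * (dl - i)%N%:R)
          - \sum_(0 <= i < dl) 1 / ((u - dl + i.+1)%N%:R * (u - i)%N%:R).
Proof.
move=> hd; rewrite /Ru.
rewrite (big_cat_nat _ (n := u - dl)) //=; last lia.
rewrite (big_cat_nat _ (m := u - dl) (n := u)) //=; [|lia|lia].
rewrite (big_cat_nat _ (m := u) (n := 2 * u - dl)) //=; [|lia|lia].
have P1 : \sum_(0 <= x < u - dl) Mu u x * Mu u (x + dl) =
   \sum_(0 <= i < u - dl) 1 / ((i.+1)%:R * (i.+1 + dl)%N%:R).
  rewrite big_nat_rev /=; apply: eq_big_nat => i /andP[_ hi].
  rewrite !Mu_lo; [|lia|lia].
  have -> : (u - (0 + (u - dl) - i.+1))%N = (i.+1 + dl)%N by lia.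
  have -> : (u - (0 + (u - dl) - i.+1 + dl))%N = i.+1 by lia.
  rewrite !div1r -invfM mulrC; done.
have P3 : \sum_(u <= x < 2 * u - dl) Mu u x * Mu u (x + dl) =
   \sum_(0 <= i < u - dl) 1 / ((i.+1)%:R * (i.+1 + dl)%N%:R).
  rewrite sum_from; last lia.
  have -> : (2 * u - dl - u = u - dl)%N by lia.
  apply: eq_big_nat => i /andP[_ hi].
  rewrite !Mu_hi; [|lia|lia].
  have -> : ((i + u).+1 - u)%N = i.+1 by lia.
  have -> : ((i + u + dl).+1 - u)%N = (i.+1 + dl)%N by lia.
  by rewrite mulrNN !div1r -invfM.
have P2 : \sum_(u - dl <= x < u) Mu u x * Mu u (x + dl) =
   - \sum_(0 <= i < dl) 1 / ((i.+1)%:R * (dl - i)%N%:R).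
  rewrite sum_from; last lia.
  have -> : (u - (u - dl) = dl)%N by lia.
  rewrite -sumrN; apply: eq_big_nat => i /andP[_ hi].
  rewrite Mu_lo; last lia. rewrite Mu_hi; last lia.
  have -> : (u - (i + (u - dl)))%N = (dl - i)%N by lia.
  have -> : ((i + (u - dl) + dl).+1 - u)%N = i.+1 by lia.
  by rewrite mulrN !div1r -invfM mulrC.
have P4 : \sum_(2 * u - dl <= x < 2 * u) Mu u x * Mu u (x + dl) =
   - \sum_(0 <= i < dl) 1 / ((u - dl + i.+1)%N%:R * (u - i)%N%:R).
  rewrite sum_from; last lia.
  have -> : (2 * u - (2 * u - dl) = dl)%N by lia.
  rewrite -sumrN; apply: eq_big_nat => i /andP[_ hi].
  rewrite Mu_hi; last lia.
  have -> : (i + (2 * u - dl) + dl = i + 2 * u)%N by lia.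
  rewrite Mu_per Mu_lo; last lia.
  have -> : ((i + (2 * u - dl)).+1 - u)%N = (u - dl + i.+1)%N by lia.
  by rewrite mulNr !div1r -invfM.
rewrite P1 P2 P3 P4; ring.
Qed.


Definition Dd (u dl : nat) : rat := Hn u - Hn (u - dl).

Lemma Hn_ge0 n : 0 <= Hn n.
Proof. by apply: sumr_ge0 => i _; rewrite div1r invr_ge0 ler0n. Qed.

Lemma Hn_split u dl : (dl <= u)%N ->
  \sum_(0 <= i < dl) 1 / (u - dl + i.+1)%N%:R = Dd u dl :> rat.
Proof.
move=> h; rewrite /Dd /Hn (big_cat_nat _ (m := 0) (n := u - dl) (p := u)) /=; [|lia|lia].
rewrite addrC addrK [RHS]sum_from; last lia.
have -> : (u - (u - dl) = dl)%N by lia.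
by apply: eq_big_nat => i _; congr (1 / _%:R); lia.
Qed.

Lemma Dd_ge0 u dl : (dl <= u)%N -> 0 <= Dd u dl.
Proof.
move=> h; rewrite -Hn_split //.
by apply: sumr_ge0 => i _; rewrite div1r invr_ge0 ler0n.
Qed.

Lemma Ru_formula u dl : (0 < dl <= u)%N ->
  Ru u dl = 2 * (1 / dl%:R) * (Hn dl + Hn (u - dl) - Hn u)
            - 2 / (dl.+1)%:R * Hn dl - 2 / (2 * u + 1 - dl)%N%:R * Dd u dl.
Proof.
move=> /andP[h1 h2]; rewrite Ru_split // L1 //.
have -> : (u - dl + dl = u)%N by lia.
have -> : \sum_(0 <= i < dl) 1 / ((i.+1)%:R * (dl - i)%N%:R)
   = \sum_(0 <= i < dl) 1 / ((1 + i)%N%:R * (1 + dl - 1 - i)%N%:R) :> rat.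
  by apply: eq_big_nat => i _; congr (1 / (_ * _%:R)); lia.
rewrite Qsum //.
have -> : \sum_(0 <= i < dl) 1 / ((u - dl + i.+1)%N%:R * (u - i)%N%:R)
   = \sum_(0 <= i < dl) 1 / (((u - dl).+1 + i)%N%:R * ((u - dl).+1 + dl - 1 - i)%N%:R) :> rat.
  by apply: eq_big_nat => i /andP[_ hi]; congr (1 / (_%:R * _%:R)); lia.
rewrite Qsum //.
have -> : \sum_(0 <= i < dl) 1 / ((u - dl).+1 + i)%N%:R = Dd u dl :> rat.
  by rewrite -Hn_split //; apply: eq_big_nat => i _; congr (1 / _%:R); lia.
have -> : (2 * 1 + dl - 1 = dl.+1)%N by lia.
have -> : (2 * (u - dl).+1 + dl - 1 = 2 * u + 1 - dl)%N by lia.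
have -> : \sum_(0 <= i < dl) 1 / (1 + i)%N%:R = Hn dl :> rat.
  by apply: eq_big_nat => i _; rewrite add1n.
by rewrite mulrA.
Qed.


Lemma Ru_bound u dl : (0 < dl <= u)%N ->
  `|Ru u dl| <= 2 * (Hn dl / (dl%:R * (dl.+1)%:R)) + 4 * (Dd u dl / dl%:R).
Proof.
move=> hd; rewrite Ru_formula //.
have [h1 h2] := andP hd.
set x := Hn dl; set y := Dd u dl.
have hx : 0 <= x by apply: Hn_ge0.
have hy : 0 <= y by apply: Dd_ge0.
have nd : (dl%:R : rat) != 0 by apply: natr_neq0.
have nd1 : ((dl.+1)%:R : rat) != 0 by apply: natr_neq0.
have e1 : 2 * (1 / dl%:R) * (x + Hn (u - dl) - Hn u) - 2 / (dl.+1)%:R * x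
   = 2 * (x / (dl%:R * (dl.+1)%:R)) - 2 * (y / dl%:R).
  rewrite /y /Dd.
  by field; rewrite nd /= -[1 + _]mulrS pnatr_eq0.
rewrite e1.
set P := x / _; set Q := y / _; set W := 2 / _ * y.
have hP : 0 <= P by rewrite /P divr_ge0 // mulr_ge0 // ler0n.
have hQ : 0 <= Q by rewrite /Q divr_ge0 // ler0n.
have hW1 : 0 <= W by rewrite /W mulr_ge0 // divr_ge0 // ler0n.
have hW2 : W <= 2 * Q.
  have hT : ((2 * u + 1 - dl)%N%:R : rat)^-1 <= (dl%:R)^-1.
    rewrite lef_pV2 ?posrE ?ltr0n; [|lia|lia].
    by rewrite ler_nat; lia.
  have -> : W = (2 * y) * ((2 * u + 1 - dl)%N%:R)^-1 by rewrite /W; ring.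
  have -> : 2 * Q = (2 * y) * (dl%:R)^-1 by rewrite /Q; ring.
  by apply: ler_wpM2l => //; rewrite mulr_ge0.
rewrite ler_norml; apply/andP; split; lra.
Qed.


Ltac side := repeat (apply/andP; split); apply: lt0r_neq0; lra.

Lemma inv_le (a b c : nat) : (0 < a)%N -> (0 < b)%N -> (b <= c * a)%N ->
  1 / a%:R <= c%:R / b%:R :> rat.
Proof.
move=> ha hb h.
rewrite ler_pdivlMr ?ltr0n // div1r mulrC ler_pdivrMr ?ltr0n //.
by rewrite -natrM ler_nat.
Qed.

Lemma Dd_le u dl : (0 < dl <= u)%N -> Dd u dl <= dl%:R * (1 / (u - dl + 1)%N%:R).
Proof.
move=> /andP[h1 h2]; rewrite -Hn_split //.
have -> : dl%:R * (1 / (u - dl + 1)%N%:R) =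
   \sum_(0 <= i < dl) (1 / (u - dl + 1)%N%:R) :> rat.
  by rewrite sumr_const_nat subn0 mulr_natl.
apply: ler_sum_nat => i /andP[_ hi].
rewrite !div1r lef_pV2 ?posrE ?ltr0n ?ler_nat; lia.
Qed.

Lemma Dd_div u dl : (0 < dl <= u)%N ->
  Dd u dl / dl%:R <= 2 / u%:R + 2 * Dd u dl / u%:R.
Proof.
move=> hd; have [h1 h2] := andP hd.
have hD : 0 <= Dd u dl by apply: Dd_ge0.
have hu : (0 : rat) < u%:R by rewrite ltr0n; lia.
have hdl : (0 : rat) < dl%:R by rewrite ltr0n.
have h3 : 0 <= 2 * Dd u dl / u%:R by rewrite divr_ge0 ?ler0n ?mulr_ge0.
case: (leqP u (2 * (u - dl + 1))) => hc.
  have h4 : 1 / (u - dl + 1)%N%:R <= 2%:R / u%:R :> rat by apply: inv_le; lia.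
  have h5 : Dd u dl / dl%:R <= 1 / (u - dl + 1)%N%:R.
    rewrite ler_pdivrMr // mulrC; exact: Dd_le.
  have : 2%:R = 2 :> rat by [].
  lra.
have h4 : 1 / dl%:R <= 2%:R / u%:R :> rat by apply: inv_le; lia.
have -> : 2 * Dd u dl / u%:R = Dd u dl * (2%:R / u%:R) by ring.
have : Dd u dl / dl%:R <= Dd u dl * (2%:R / u%:R).
  have -> : Dd u dl / dl%:R = Dd u dl * (1 / dl%:R) by ring.
  by apply: ler_wpM2l.
have : 0 <= 2 / u%:R :> rat by rewrite divr_ge0 ?ler0n.
lra.
Qed.

Lemma S1 N : \sum_(0 <= i < N) Hn i.+1 / ((i.+1)%:R * (i.+2)%:R) + Hn N / (N.+1)%:R
   = \sum_(0 <= i < N) 1 / ((i.+1)%:R * (i.+1)%:R).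
Proof.
elim: N => [|N IH]; first by rewrite !big_geq // Hn0 mul0r addr0.
rewrite !big_nat_recr //= -IH HnS.
have hN : 0 <= N%:R :> rat := ler0n _ _.
field; side.
Qed.

Lemma S2 N : \sum_(0 <= i < N) 1 / ((i.+1)%:R * (i.+1)%:R) <= 2 - 2 / (N.+1)%:R :> rat.
Proof.
elim: N => [|N IH]; first by rewrite big_geq // divr1 subrr.
rewrite big_nat_recr //=.
have hN : 0 <= N%:R :> rat := ler0n _ _.
suff : 2 - 2 / (N.+1)%:R + 1 / ((N.+1)%:R * (N.+1)%:R) <= 2 - 2 / (N.+2)%:R :> rat.
  by move=> H; apply: le_trans H; rewrite lerD2r.
rewrite -subr_ge0.
have -> : 2 - 2 / (N.+2)%:R - (2 - 2 / (N.+1)%:R + 1 / ((N.+1)%:R * (N.+1)%:R))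
   = N%:R / ((N.+1)%:R * (N.+1)%:R * (N.+2)%:R) :> rat.
  field; side.
by rewrite divr_ge0 // !mulr_ge0 // ler0n.
Qed.

Lemma S3 N : \sum_(0 <= i < N) Hn i = N%:R * Hn N - N%:R.
Proof.
elim: N => [|N IH]; first by rewrite big_geq // mul0r subr0.
rewrite big_nat_recr //= IH HnS.
have hN : 0 <= N%:R :> rat := ler0n _ _.
field; side.
Qed.

Lemma S4 u : \sum_(0 <= i < u) Dd u i.+1 = u%:R.
Proof.
rewrite /Dd sumrB sumr_const_nat subn0.
have -> : \sum_(0 <= i < u) Hn (u - i.+1) = \sum_(0 <= i < u) Hn i.
  by rewrite [RHS]big_nat_rev.
rewrite S3 mulr_natl; ring.
Qed.


Lemma half_sum u : (0 < u)%N -> \sum_(0 <= i < u) `|Ru u i.+1| <= 20.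
Proof.
move=> hu.
have hU : (0 : rat) < u%:R by rewrite ltr0n.
have step : forall i, (0 <= i < u)%N -> `|Ru u i.+1| <=
   2 * (Hn i.+1 / ((i.+1)%:R * (i.+2)%:R)) + 4 * (2 / u%:R + (2 / u%:R) * Dd u i.+1).
  move=> i /andP[_ hi].
  have hb : (0 < i.+1 <= u)%N by lia.
  apply: le_trans (@Ru_bound u i.+1 hb) _.
  rewrite lerD2l ler_wpM2l //.
  have -> : 2 / u%:R * Dd u i.+1 = 2 * Dd u i.+1 / u%:R by ring.
  by apply: Dd_div; lia.
apply: le_trans (ler_sum_nat step) _.
rewrite big_split /= -!big_distrr /= big_split /= -big_distrr /=.
have -> : \sum_(0 <= i < u) (u%:R : rat)^-1 = 1.
    rewrite sumr_const_nat subn0 -mulr_natr; field.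
  by rewrite lt0r_neq0.
rewrite -big_distrr /= S4.
have -> : 2 / u%:R * u%:R = 2 :> rat.
  by field; rewrite lt0r_neq0.
set A := \sum_(0 <= i < u) _.
have hA : A <= 2.
  have h1 := S1 u; have h2 := S2 u.
  have h3 : 0 <= Hn u / (u.+1)%:R by rewrite divr_ge0 ?ler0n ?Hn_ge0.
  have h4 : 0 <= 2 / (u.+1)%:R :> rat by rewrite divr_ge0 ?ler0n.
  rewrite -h1 in h2; rewrite -/A in h2.
  move: h2 h3 h4; set B := Hn u / _; set C := 2 / _; lra.
lra.
Qed.

Lemma R0_bound u : `|Ru u 0| <= 4.
Proof.
rewrite Ru_split // [X in _ - X - _]big_geq // [X in _ - X]big_geq // !subr0.
have -> : \sum_(0 <= i < u - 0) 1 / ((i.+1)%:R * (i.+1 + 0)%N%:R)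
    = \sum_(0 <= i < u) 1 / ((i.+1)%:R * (i.+1)%:R) :> rat.
  by rewrite subn0; apply: eq_bigr => i _; rewrite addn0.
have h := S2 u.
have h0 : 0 <= \sum_(0 <= i < u) 1 / ((i.+1)%:R * (i.+1)%:R) :> rat.
  by apply: sumr_ge0 => i _; rewrite divr_ge0 // mulr_ge0 // ler0n.
have h4 : 0 <= 2 / (u.+1)%:R :> rat by rewrite divr_ge0 ?ler0n.
rewrite ger0_norm; last by rewrite mulr_ge0.
move: h h0 h4; set S := \sum_(0 <= i < u) _; set C := 2 / _; lra.
Qed.

Lemma Ru_sym u x : (x <= 2 * u)%N -> Ru u (2 * u - x) = Ru u x.
Proof.
move=> hx; rewrite /Ru.
have Hp : forall y, (fun d => Mu u d * Mu u (d + (2 * u - x))) (y + 2 * u)%N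
    = (fun d => Mu u d * Mu u (d + (2 * u - x))) y.
  by move=> y /=; rewrite Mu_per addnAC Mu_per.
rewrite -(@sum_shift_per (2 * u) _ Hp x).
apply: eq_bigr => d _ /=.
have -> : (x + d + (2 * u - x) = d + 2 * u)%N by lia.
by rewrite Mu_per addnC mulrC.
Qed.

Lemma T_bound u : (0 < u)%N -> \sum_(0 <= d < 2 * u) `|Ru u d| <= 44.
Proof.
move=> hu.
rewrite (big_cat_nat _ (m := 0) (n := u) (p := 2 * u)) /=; [|lia|lia].
have e2 : \sum_(u <= d < 2 * u) `|Ru u d| = \sum_(0 <= i < u) `|Ru u i.+1|.
  rewrite sum_from; last lia.
  have -> : (2 * u - u = u)%N by lia.
  rewrite big_nat_rev /=; apply: eq_big_nat => i /andP[_ hi].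
  rewrite -Ru_sym; last lia.
  by congr (`|Ru u _|); lia.
rewrite e2.
case: u hu e2 => [//|u'] _ _.
rewrite big_nat_recl //.
have hh := @half_sum u'.+1 isT.
rewrite big_nat_recr //= in hh.
rewrite [X in _ + X <= _]big_nat_recr //=.
have h0 := R0_bound u'.+1.
have hn : 0 <= `|Ru u'.+1 u'.+1| by [].
move: hh h0 hn; set a := \sum_(0 <= i < u') _; set b := `|_|; set c := `|_|.
lra.
Qed.


Lemma sum_tuple_ffun n (G : n.-tuple bool -> rat) :
  \sum_(t : n.-tuple bool) G t = \sum_(g : {ffun 'I_n -> bool}) G [tuple g i | i < n].
Proof.
rewrite (reindex (fun g : {ffun 'I_n -> bool} => [tuple g i | i < n])) //.
apply: onW_bij; exists (fun t : n.-tuple bool => [ffun i => tnth t i]).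
  by move=> g; apply/ffunP => i; rewrite ffunE tnth_mktuple.
by move=> t; apply: eq_from_tnth => i; rewrite tnth_mktuple ffunE.
Qed.

Lemma expect2 n (p : nat -> rat) (a b : 'I_n) : a != b ->
  \sum_(t : n.-tuple bool)
     (\prod_(i < n) (if nth false t i then p i else 1 - p i))
       * sgn (nth false t a) * sgn (nth false t b)
  = (2 * p a - 1) * (2 * p b - 1).
Proof.
move=> hab.
pose f (i : 'I_n) (x : bool) : rat := (if x then p i else 1 - p i)
   * (if i == a then sgn x else 1) * (if i == b then sgn x else 1).
have e1 : forall t : n.-tuple bool,
   (\prod_(i < n) (if nth false t i then p i else 1 - p i))
       * sgn (nth false t a) * sgn (nth false t b)
   = \prod_(i < n) f i (nth false t i).
  move=> t; rewrite /f !big_split /=.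
  by rewrite -!big_mkcond !big_pred1_eq.
rewrite (eq_bigr _ (fun t _ => e1 t)) sum_tuple_ffun.
have e2 : forall g : {ffun 'I_n -> bool},
   \prod_(i < n) f i (nth false [tuple g j | j < n] i) = \prod_(i < n) f i (g i).
  by move=> g; apply: eq_bigr => i _; rewrite nth_mktuple.
rewrite (eq_bigr _ (fun g _ => e2 g)) -bigA_distr_bigA /=.
have e3 : forall i : 'I_n, \sum_(x : bool) f i x
   = (if i == a then 2 * p i - 1 else 1) * (if i == b then 2 * p i - 1 else 1).
  move=> i; rewrite big_bool /f /sgn.
  case: (eqVneq i a) => [hia|ha]; case: (eqVneq i b) => [hib|hb] //=.
  - by move: hab; rewrite -hia -hib eqxx.
  all: rewrite ?(mulr1, mul1r, mulrN1); try lra.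
rewrite (eq_bigr _ (fun i _ => e3 i)) big_split /=.
by rewrite -!big_mkcond !big_pred1_eq.
Qed.


Lemma idx_nat k (i j : nat) : (0 < i)%N ->
  idx k (i%:Z + j%:Z) = ((i - 1 + j) %% 4 ^ k)%N.
Proof.
move=> hi; rewrite /idx -PoszD subzn; last lia.
by rewrite modz_nat absz_nat; congr (_ %% _)%N; lia.
Qed.

Lemma idx_per k (x : int) : idx k (x + (4 ^ k)%N%:Z) = idx k x.
Proof.
rewrite /idx; congr (absz _).
have -> : (x + (4 ^ k)%N%:Z - 1 = (x - 1) + (4 ^ k)%N%:Z)%R by ring.
by rewrite modzDr.
Qed.

Lemma blockmod (x d s : nat) : (0 < s)%N ->
  (((x + d * s) %% (s * s)) %/ s = (x %/ s + d) %% s)%N.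
Proof.
move=> hs.
set Q := (x %/ s + d)%N.
have e : (x + d * s = (Q %/ s) * (s * s) + ((Q %% s) * s + x %% s))%N.
  have h1 := divn_eq x s; have h2 := divn_eq Q s.
  rewrite /Q in h2 *. nia.
rewrite e modnMDl modn_small; last first.
  have := ltn_pmod Q hs; have := ltn_pmod x hs; nia.
by rewrite divnMDl // divn_small ?addn0 // ltn_pmod.
Qed.

Lemma sqn_ell k : (0 < k)%N -> sqn k = (2 * ell k)%N.
Proof.
case: k => // k _; rewrite /sqn /ell expnS.
rewrite !mul2n doubleK; reflexivity.
Qed.

Lemma four_sq k : (4 ^ k = sqn k * sqn k)%N.
Proof. by rewrite /sqn -expnMn. Qed.

Lemma prob_Mu k a : (0 < k)%N -> (a < 4 ^ k)%N ->
  2 * prob k a - 1 = Mu (ell k) (a %/ sqn k).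
Proof.
move=> hk ha.
have hs := sqn_ell k hk.
have hs0 : (0 < sqn k)%N by rewrite /sqn expn_gt0.
have hq : (a %/ sqn k < 2 * ell k)%N.
  by rewrite -hs ltn_divLR // -four_sq.
rewrite /prob /blk /Mu (modn_small hq).
set q := (a %/ sqn k)%N; set u := ell k.
have -> : (q + 1 <= u)%N = (q < u)%N by rewrite addn1.
case: ifP => hc.
  have -> : (u + 1 - (q + 1))%N = (u - q)%N by lia.
  have hn : ((u - q)%N%:R : rat) != 0 by rewrite pnatr_eq0; lia.
  by field.
have -> : (q + 1 - u)%N = (q.+1 - u)%N by lia.
have hn : ((q.+1 - u)%N%:R : rat) != 0 by rewrite pnatr_eq0; lia.
by field.
Qed.

Lemma E2_nat k (i j : nat) : (0 < k)%N -> (0 < i <= 4 ^ k)%N -> (0 < j <= 4 ^ k)%N ->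
  i <> j ->
  E2 k i%:Z j%:Z = 1 / (sqn k)%:R *
    \sum_(0 <= d < sqn k) Mu (ell k) ((i - 1) %/ sqn k + d) * Mu (ell k) ((j - 1) %/ sqn k + d).
Proof.
move=> hk /andP[hi1 hi2] /andP[hj1 hj2] hij.
have hs0 : (0 < sqn k)%N by rewrite /sqn expn_gt0.
have hn0 : (0 < 4 ^ k)%N by rewrite expn_gt0.
rewrite /E2 big_mkord; congr (_ * _); apply: eq_bigr => d _.
rewrite /hval !idx_nat //.
set a := ((i - 1 + d * sqn k) %% 4 ^ k)%N.
set b := ((j - 1 + d * sqn k) %% 4 ^ k)%N.
have ha : (a < 4 ^ k)%N by rewrite ltn_pmod.
have hb : (b < 4 ^ k)%N by rewrite ltn_pmod.
have hne : Ordinal ha != Ordinal hb.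
  apply/eqP => /(congr1 val) /= /eqP hab.
  move: hab; rewrite /a /b eqn_modDr !modn_small; [|lia|lia].
  move=> /eqP h; lia.
have := @expect2 (4 ^ k) (prob k) _ _ hne; rewrite /= => e.
rewrite /wt e !prob_Mu // /a /b four_sq !blockmod //.
have Mm : forall x, Mu (ell k) (x %% sqn k) = Mu (ell k) x.
  by move=> x; rewrite (sqn_ell k hk) Mu_mod.
by rewrite !Mm.
Qed.


Lemma partA k (i j : int) :
  E2 k i j = E2 k (i + (2 ^ k)%N%:Z) (j + (2 ^ k)%N%:Z).
Proof.
rewrite /E2; congr (_ * _).
pose F (d : nat) := \sum_(t : (4 ^ k).-tuple bool)
   wt t * hval t (i + (d * sqn k)%N%:Z) * hval t (j + (d * sqn k)%N%:Z).
have Fp : forall x, F (x + sqn k)%N = F x.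
  move=> x; rewrite /F; apply: eq_bigr => t _.
  have e : forall y : int, (y + ((x + sqn k) * sqn k)%N%:Z = y + (x * sqn k)%N%:Z + (4 ^ k)%N%:Z)%R.
    move=> y; rewrite four_sq mulnDl PoszD; ring.
  by rewrite /hval !e !idx_per.
have := @sum_shift_per (sqn k) F Fp 1.
move=> h; rewrite !big_mkord in h; rewrite -h /F.
apply: eq_bigr => d _; apply: eq_bigr => t _.
have e : forall y : int, (y + (2 ^ k)%N%:Z + (d * sqn k)%N%:Z = y + ((1 + d) * sqn k)%N%:Z)%R.
  move=> y; rewrite mulnDl mul1n PoszD /sqn; ring.
by rewrite !e.
Qed.

Lemma partB k (i i' j j' : nat) : (0 < k)%N ->
      (1 <= i <= 4 ^ k)%N -> (1 <= i' <= 4 ^ k)%N ->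
      (1 <= j <= 4 ^ k)%N -> (1 <= j' <= 4 ^ k)%N ->
      ((i - 1) %/ 2 ^ k = (i' - 1) %/ 2 ^ k)%N ->
      ((j - 1) %/ 2 ^ k = (j' - 1) %/ 2 ^ k)%N ->
      i <> j -> i' <> j' ->
      E2 k i%:Z j%:Z = E2 k i'%:Z j'%:Z.
Proof.
move=> hk hi hi' hj hj' e1 e2 n1 n2.
rewrite !E2_nat //.
by rewrite /sqn e1 e2.
Qed.

Definition Gr k (a b : nat) : rat :=
  \sum_(0 <= d < sqn k) Mu (ell k) (a + d) * Mu (ell k) (b + d).

Lemma block_sum (s m : nat) (F : nat -> rat) :
  \sum_(0 <= p < m * s) F (p %/ s)%N = s%:R * \sum_(0 <= a < m) F a.
Proof.
case: s => [|s]; first by rewrite muln0 big_geq // mul0r.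
elim: m => [|m IH]; first by rewrite mul0n !big_geq // mulr0.
rewrite mulSn addnC (big_cat_nat _ (n := m * s.+1)) /=; [|lia|lia].
rewrite IH big_nat_recr //= mulrDr; congr (_ + _).
rewrite sum_from; last lia.
have -> : (m * s.+1 + s.+1 - m * s.+1 = s.+1)%N by lia.
rewrite (eq_big_nat _ _ (F2 := fun _ => F m)).
  by rewrite sumr_const_nat subn0 mulr_natl.
move=> i /andP[_ hi]; rewrite addnC divnMDl // divn_small // addn0; reflexivity.
Qed.

Lemma Mu_eqmod u x y : (x %% (2 * u) = y %% (2 * u))%N -> Mu u x = Mu u y.
Proof. by move=> h; rewrite -Mu_mod h Mu_mod. Qed.

Lemma Gr_Ru k a b : (0 < k)%N -> (a <= sqn k)%N ->
  Gr k a b = Ru (ell k) ((sqn k - a + b) %% sqn k).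
Proof.
move=> hk ha; rewrite /Gr /Ru.
move: ha; rewrite (sqn_ell k hk); set u := ell k => ha.
set dl := ((2 * u - a + b) %% (2 * u))%N.
have Fp : forall x, (fun d => Mu u d * Mu u (d + dl)) (x + 2 * u)%N
   = (fun d => Mu u d * Mu u (d + dl)) x.
  by move=> x /=; rewrite Mu_per addnAC Mu_per.
rewrite -(@sum_shift_per (2 * u) _ Fp a).
apply: eq_bigr => d _ /=; congr (_ * _).
apply: Mu_eqmod; rewrite /dl modnDmr.
have -> : (a + d + (2 * u - a + b) = (b + d) + 2 * u)%N by lia.
by rewrite modnDr.
Qed.

Lemma Gr_row k a : (0 < k)%N -> (a <= sqn k)%N ->
  \sum_(0 <= b < sqn k) `|Gr k a b| = \sum_(0 <= dl < sqn k) `|Ru (ell k) dl|.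
Proof.
move=> hk ha.
rewrite (eq_bigr (fun b => `|Ru (ell k) ((sqn k - a + b) %% sqn k)|)); last first.
  by move=> b _; rewrite Gr_Ru.
have Fp : forall x, (fun y => `|Ru (ell k) (y %% sqn k)|) (x + sqn k)%N
   = (fun y => `|Ru (ell k) (y %% sqn k)|) x.
  by move=> x /=; rewrite modnDr.
rewrite (@sum_shift_per (sqn k) _ Fp (sqn k - a)).
by apply: eq_big_nat => d /andP[_ hd] /=; rewrite modn_small.
Qed.

Lemma partC k : (0 < k)%N ->
  \sum_(1 <= i < (4 ^ k).+1) \sum_(1 <= j < (4 ^ k).+1 | i != j)
        `|E2 k i%:Z j%:Z| <= 44 * (4 ^ k)%:R.
Proof.
move=> hk.
have hs0 : (0 < sqn k)%N by rewrite /sqn expn_gt0.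
have hu0 : (0 < ell k)%N by have := sqn_ell k hk; lia.
have hS : (0 : rat) < (sqn k)%:R by rewrite ltr0n.
apply: (@le_trans _ _ (\sum_(1 <= i < (4 ^ k).+1) \sum_(1 <= j < (4 ^ k).+1)
    1 / (sqn k)%:R * `|Gr k ((i - 1) %/ sqn k) ((j - 1) %/ sqn k)|)).
  apply: ler_sum_nat => i /andP[hi1 hi2].
  rewrite big_mkcond /=; apply: ler_sum_nat => j /andP[hj1 hj2].
  case: eqP => hij /=.
    by rewrite mulr_ge0 // divr_ge0 // ler0n.
  rewrite E2_nat //; [|lia|lia].
  by rewrite normrM ger0_norm // divr_ge0 // ler0n.
rewrite big_add1 /=.
rewrite (eq_bigr (fun i => 1 / (sqn k)%:R *
   \sum_(0 <= j < 4 ^ k) `|Gr k (i %/ sqn k) (j %/ sqn k)|)); last first.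
  move=> i _; rewrite big_add1 /= -big_distrr /=.
  congr (_ * _); apply: eq_bigr => j _; rewrite !subn1 /=; reflexivity.
rewrite -big_distrr /=.
set T := \sum_(0 <= dl < sqn k) `|Ru (ell k) dl|.
have e1 : forall a, (a < sqn k)%N ->
   \sum_(0 <= j < 4 ^ k) `|Gr k a (j %/ sqn k)| = (sqn k)%:R * T.
  move=> a ha; rewrite four_sq (block_sum (sqn k) (sqn k) (fun b => `|Gr k a b|)).
  by rewrite Gr_row //; apply: ltnW.
rewrite four_sq (block_sum (sqn k) (sqn k) (fun a => \sum_(0 <= j < sqn k * sqn k) `|Gr k a (j %/ sqn k)|)).
rewrite (eq_big_nat _ _ (F2 := fun _ => (sqn k)%:R * T)); last first.
  by move=> a /andP[_ ha]; rewrite -four_sq e1.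
rewrite sumr_const_nat subn0.
have hT : T <= 44.
  by rewrite /T (sqn_ell k hk); apply: T_bound.
have -> : 1 / (sqn k)%:R * ((sqn k)%:R * ((sqn k)%:R * T *+ sqn k))
   = (sqn k)%:R * (sqn k)%:R * T.
  rewrite -mulr_natr; field; exact: lt0r_neq0.
rewrite natrM [44 * _]mulrC.
by apply: ler_wpM2l => //; rewrite mulr_ge0 // ler0n.
Qed.

Theorem lemma2p2 :
  (forall k : nat, (0 < k)%N -> forall i j : int,
      E2 k i j = E2 k (i + (2 ^ k)%N%:Z) (j + (2 ^ k)%N%:Z))
  /\
  (forall k : nat, (0 < k)%N -> forall i i' j j' : nat,
      (1 <= i <= 4 ^ k)%N -> (1 <= i' <= 4 ^ k)%N ->
      (1 <= j <= 4 ^ k)%N -> (1 <= j' <= 4 ^ k)%N ->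
      ((i - 1) %/ 2 ^ k = (i' - 1) %/ 2 ^ k)%N ->
      ((j - 1) %/ 2 ^ k = (j' - 1) %/ 2 ^ k)%N ->
      i <> j -> i' <> j' ->
      E2 k i%:Z j%:Z = E2 k i'%:Z j'%:Z)
  /\
  (exists C : rat, forall k : nat, (0 < k)%N ->
      \sum_(1 <= i < (4 ^ k).+1) \sum_(1 <= j < (4 ^ k).+1 | i != j)
        `|E2 k i%:Z j%:Z| <= C * (4 ^ k)%:R).
Proof.
split; first by move=> k _ i j; apply: partA.
split; first by move=> k hk i i' j j'; apply: partB.
by exists 44 => k hk; apply: partC.
Qed.
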